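(* Let $G=(V,E)$ be a graph and $P:=\{k\in V : \deg_G(k)=|V|-1\}$. Then (i) the set of vertices of $\{X\in\mathbb{S}^V_+ : \operatorname{tr}(X)=1,\ X_{ij}=0\ \forall ij\in E\}$ is $\{e_ke_k^{\mathsf T} : k\in P\}$; (ii) the set of vertices of $\{X\in\mathbb{S}^V_+ : \operatorname{tr}(X)=1,\ X_{ij}=0\ \forall ij\in E,\ X_{ij}\ge 0\ \forall ij\in\binom{V}{2}\setminus E\}$ is $\{e_ke_k^{\mathsf T} : k\in V\}$; (iii) the set of vertices of $\{X\in\mathbb{S}^V_+ : \operatorname{tr}(X)=1,\ X_{ij}\le 0\ \forall ij\in E\}$ is $\{e_ke_k^{\mathsf T} : k\in P\}$.
   Context: $\mathbb{S}^V_+$ denotes the real symmetric positive semidefinite matrices indexed by $V$, with trace inner product; $e_k$ are standard basis vectors of $\mathbb{R}^V$. For a convex set $\mathcal{C}$ in a finite-dimensional space $\mathbb{E}$ and $\bar x\in\mathcal{C}$, the normal cone is $N_{\mathcal{C}}(\bar x):=\{c : \langle c,x\rangle\le\langle c,\bar x\rangle\ \forall x\in\mathcal{C}\}$; $\bar x$ is a vertex if $\dim N_{\mathcal{C}}(\bar x)=\dim\mathbb{E}$ (here $\mathbb{E}=\mathbb{S}^V$). *)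

(* Defs.v *)
From HB Require Import structures.
From mathcomp Require Import all_boot all_order all_algebra.
From mathcomp Require Import reals.
Set Implicit Arguments. Unset Strict Implicit. Unset Printing Implicit Defensive.
Import Order.TTheory GRing.Theory Num.Theory.
Local Open Scope ring_scope.

Definition simple_graph n (E : rel 'I_n) : Prop :=
  (forall i j, E i j = E j i) /\ (forall i, ~~ E i i).

Definition deg n (E : rel 'I_n) (k : 'I_n) : nat := #|[set j | E k j]|.

Definition full_deg n (E : rel 'I_n) (k : 'I_n) : Prop := deg E k = (n - 1)%N.

Definition symmetric {R : realType} n (X : 'M[R]_n) : Prop := X^T = X.

Definition psd {R : realType} n (X : 'M[R]_n) : Prop :=
  symmetric X /\ forall x : 'cV[R]_n, 0 <= (x^T *m X *m x) 0 0.

Definition tip {R : realType} n (C X : 'M[R]_n) : R := \tr (C^T *m X).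

Definition normal_cone {R : realType} n (C : 'M[R]_n -> Prop) (Xb : 'M[R]_n)
  : 'M[R]_n -> Prop :=
  fun c => symmetric c /\ forall X, C X -> tip c X <= tip c Xb.

(* dimension of (the linear span = affine hull of) a set N of matrices
   that contains 0: the maximal size of a linearly independent family in N. *)
Definition set_dim {R : realType} n (N : 'M[R]_n -> Prop) (d : nat) : Prop :=
  (exists s : seq 'M[R]_n, (forall c, c \in s -> N c) /\ free s /\ size s = d) /\
  (forall s : seq 'M[R]_n, (forall c, c \in s -> N c) -> free s -> (size s <= d)%N).

Definition dim_sym (n : nat) : nat := (n * n.+1) %/ 2.

Definition is_vertex {R : realType} n (C : 'M[R]_n -> Prop) (Xb : 'M[R]_n) : Prop :=
  C Xb /\ set_dim (normal_cone C Xb) (dim_sym n).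

Definition ekek {R : realType} n (k : 'I_n) : 'M[R]_n := delta_mx k k.

Definition spec1 {R : realType} n (E : rel 'I_n) (X : 'M[R]_n) : Prop :=
  psd X /\ \tr X = 1 /\ (forall i j, E i j -> X i j = 0).

Definition spec2 {R : realType} n (E : rel 'I_n) (X : 'M[R]_n) : Prop :=
  psd X /\ \tr X = 1 /\ (forall i j, E i j -> X i j = 0) /\
  (forall i j, i != j -> ~~ E i j -> 0 <= X i j).

Definition spec3 {R : realType} n (E : rel 'I_n) (X : 'M[R]_n) : Prop :=
  psd X /\ \tr X = 1 /\ (forall i j, E i j -> X i j <= 0).

(* Main.v *)
Require Import Defs.
From HB Require Import structures.
From mathcomp Require Import all_boot all_order all_algebra.
From mathcomp Require Import reals.
From mathcomp Require Import zify ring lra.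
Import Order.TTheory GRing.Theory Num.Theory.

Definition Apair n : pred ('I_n * 'I_n) := fun p => (p.1 <= p.2)%N.

Lemma card_Apair n : #|Apair n| = dim_sym n.
Proof.
rewrite -sum1_card big_mkcond.
rewrite -(pair_bigA _ (fun i j : 'I_n => if (i <= j)%N then 1%N else 0%N)) /= exchange_big /=.
have H : forall j : 'I_n, \sum_(i < n) (if (i <= j)%N then 1%N else 0%N) = j.+1.
  move=> j. rewrite -(big_mkord xpredT (fun i => if (i <= j)%N then 1%N else 0%N)).
  rewrite (big_cat_nat (n := j.+1)) //=.
  rewrite [\sum_(j.+1 <= i < n) _]big1_seq ?addn0; last first.
    move=> i /andP[_]; rewrite mem_index_iota => /andP[h1 h2]; case: ifP => [h3|//]; exfalso; move: h1 h3; clear; lia.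
  rewrite (eq_big_seq (fun=> 1%N)); last first.
    move=> i; rewrite mem_index_iota => /andP[h1 h2]; case: ifP => [//|h3]; exfalso; move: h2 h3; clear; lia.
  by rewrite sum_nat_const_nat muln1 subn0.
rewrite (eq_bigr (fun j : 'I_n => j.+1)); last by move=> j _; rewrite H.
rewrite -(big_mkord xpredT (fun j => j.+1)).
have -> : (\sum_(0 <= j < n) j.+1 = \sum_(0 <= j < n.+1) j)%N.
  by rewrite big_nat_recl //= add0n -(big_add1 _ _ 0 n) /=.
rewrite bin2_sum bin2 /dim_sym divn2 /= mulnC //.
Qed.

Local Open Scope ring_scope.

Lemma sum_delta {R : realType} {n : nat} (F : 'I_n -> R) a :
  \sum_i ((i == a)%:R * F i) = F a.
Proof.
rewrite (bigD1 a) //= eqxx mul1r big1 ?addr0 // => i /negPf ->; by rewrite mul0r.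
Qed.

Lemma tipE {R : realType} {n : nat} (C X : 'M[R]_n) :
  tip C X = \sum_a \sum_b C a b * X a b.
Proof.
rewrite /tip /mxtrace exchange_big /=; apply: eq_bigr => b _.
by rewrite mxE; apply: eq_bigr => a _; rewrite mxE.
Qed.

Lemma tipDl {R : realType} {n : nat} (C1 C2 X : 'M[R]_n) : tip (C1 + C2) X = tip C1 X + tip C2 X.
Proof.
rewrite !tipE -big_split /=; apply: eq_bigr => a _; rewrite -big_split /=.
by apply: eq_bigr => b _; rewrite mxE mulrDl.
Qed.

Lemma tipZl {R : realType} {n : nat} (c : R) (C X : 'M[R]_n) : tip (c *: C) X = c * tip C X.
Proof.
rewrite !tipE mulr_sumr; apply: eq_bigr => a _; rewrite mulr_sumr.
by apply: eq_bigr => b _; rewrite mxE mulrA.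
Qed.

Lemma tipNl {R : realType} {n : nat} (C X : 'M[R]_n) : tip (- C) X = - tip C X.
Proof. by rewrite -scaleN1r tipZl mulN1r. Qed.

Lemma tipDr {R : realType} {n : nat} (C X1 X2 : 'M[R]_n) : tip C (X1 + X2) = tip C X1 + tip C X2.
Proof.
rewrite !tipE -big_split /=; apply: eq_bigr => a _; rewrite -big_split /=.
by apply: eq_bigr => b _; rewrite mxE mulrDr.
Qed.

Lemma tipZr {R : realType} {n : nat} (c : R) (C X : 'M[R]_n) : tip C (c *: X) = c * tip C X.
Proof.
rewrite !tipE mulr_sumr; apply: eq_bigr => a _; rewrite mulr_sumr.
by apply: eq_bigr => b _; rewrite mxE mulrCA.
Qed.

Lemma delta_entry (R : realType) m p (a i : 'I_m) (b j : 'I_p) :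
  (delta_mx a b : 'M[R]_(m, p)) i j = (i == a)%:R * (j == b)%:R.
Proof. by rewrite mxE -natrM mulnb. Qed.

Lemma tip_deltal {R : realType} {n : nat} (a b : 'I_n) (X : 'M[R]_n) : tip (delta_mx a b) X = X a b.
Proof.
rewrite tipE (eq_bigr (fun i => (i == a)%:R * \sum_j ((j == b)%:R * X i j))).
  by rewrite sum_delta sum_delta.
by move=> i _; rewrite mulr_sumr; apply: eq_bigr => j _; rewrite delta_entry mulrA.
Qed.

Lemma tip_deltar {R : realType} {n : nat} (a b : 'I_n) (C : 'M[R]_n) : tip C (delta_mx a b) = C a b.
Proof.
rewrite tipE (eq_bigr (fun i => (i == a)%:R * \sum_j ((j == b)%:R * C i j))).
  by rewrite sum_delta sum_delta.
move=> i _; rewrite mulr_sumr; apply: eq_bigr => j _; rewrite delta_entry.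
by rewrite mulrC -!mulrA [_ * C i j]mulrC.
Qed.

Lemma quadE {R : realType} {n : nat} (x : 'cV[R]_n) (X : 'M[R]_n) :
  (x^T *m X *m x) 0 0 = \sum_a \sum_b x a 0 * X a b * x b 0.
Proof.
rewrite mxE exchange_big /=; apply: eq_bigr => b _; rewrite mxE mulr_suml.
by apply: eq_bigr => a _; rewrite mxE.
Qed.

Lemma psd_two {R : realType} {n : nat} (X : 'M[R]_n) (a b : 'I_n) (l m : R) :
  psd X -> a != b ->
  0 <= l ^+ 2 * X a a + 2 * l * m * X a b + m ^+ 2 * X b b.
Proof.
move=> [hs hq] hab.
have hsym : X b a = X a b by rewrite -{1}hs mxE.
have := hq (l *: delta_mx a 0 + m *: delta_mx b 0); rewrite quadE.
have ex : forall i : 'I_n, (l *: delta_mx a 0 + m *: delta_mx b 0 : 'cV[R]_n) i 0 =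
    (i == a)%:R * l + (i == b)%:R * m.
  by move=> i; rewrite !mxE !eqxx !andbT [l * _]mulrC [m * _]mulrC.
have inner : forall i : 'I_n, \sum_j (l *: delta_mx a 0 + m *: delta_mx b 0 : 'cV[R]_n) i 0 * X i j *
    (l *: delta_mx a 0 + m *: delta_mx b 0 : 'cV[R]_n) j 0 =
    ((i == a)%:R * l + (i == b)%:R * m) * (l * X i a + m * X i b).
  move=> i; rewrite ex.
  rewrite (eq_bigr (fun j => ((j == a)%:R * (((i == a)%:R * l + (i == b)%:R * m) * X i j * l)) +
     ((j == b)%:R * (((i == a)%:R * l + (i == b)%:R * m) * X i j * m)))); last first.
    by move=> j _; rewrite ex; ring.
  by rewrite big_split /= !sum_delta; ring.
rewrite (eq_bigr _ (fun i _ => inner i)).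
rewrite (eq_bigr (fun i => ((i == a)%:R * (l * (l * X i a + m * X i b))) +
    ((i == b)%:R * (m * (l * X i a + m * X i b))))); last by move=> i _; ring.
by rewrite big_split /= !sum_delta hsym; congr (0 <= _); ring.
Qed.

Lemma psd_diag {R : realType} {n : nat} (X : 'M[R]_n) (a : 'I_n) : psd X -> 0 <= X a a.
Proof.
move=> [hs hq]; have := hq (delta_mx a 0); rewrite quadE.
rewrite (eq_bigr (fun i => (i == a)%:R * X i a)); first by rewrite sum_delta.
move=> i _; rewrite (eq_bigr (fun j => (j == a)%:R * ((i == a)%:R * X i j))).
  by rewrite sum_delta.
by move=> j _; rewrite !delta_entry !eqxx !mulr1; ring.
Qed.

Lemma psd_offdiag {R : realType} {n : nat} (X : 'M[R]_n) (a b : 'I_n) :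
  psd X -> a != b -> 2 * X a b <= X a a + X b b.
Proof.
move=> h hab; have := @psd_two R n X a b 1 (-1) h hab.
by rewrite expr1n sqrrN expr1n !mul1r mulrN1 mulNr; lra.
Qed.

Lemma psd_zero {R : realType} {n : nat} (X : 'M[R]_n) (a b : 'I_n) :
  psd X -> a != b -> X a a = 0 -> X a b = 0.
Proof.
move=> h hab h0; apply/eqP; apply/negPn/negP => hne.
have := @psd_two R n X a b (- (X b b + 1) / (2 * X a b)) 1 h hab.
rewrite h0 mulr0 add0r expr1n mul1r.
have -> : 2 * (- (X b b + 1) / (2 * X a b)) * 1 * X a b = - (X b b + 1).
  by field; exact: hne.
lra.
Qed.


Definition bsym {R : realType} {n} (a b : 'I_n) : 'M[R]_n :=
  delta_mx a b + (a != b)%:R *: delta_mx b a.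

Lemma sym_decomp {R : realType} {n : nat} (c : 'M[R]_n) : Defs.symmetric c ->
  c = \sum_(p | Apair n p) c p.1 p.2 *: bsym p.1 p.2.
Proof.
move=> hc; have hs : forall i j, c j i = c i j by move=> i j; rewrite -{1}hc mxE.
apply/matrixP => i j; rewrite summxE.
have ent : forall a b, (c a b *: bsym a b) i j =
   c a b * ((a == i)%:R * (b == j)%:R + (a != b)%:R * ((b == i)%:R * (a == j)%:R)).
  by move=> a b /=; rewrite !mxE -!natrM !mulnb [i == a]eq_sym [j == b]eq_sym [i == b]eq_sym [j == a]eq_sym.
case: (leqP i j) => hij.
- rewrite (bigD1 (i, j)) //= ent /= !eqxx big1 ?addr0.
    case: eqP => [->|hne]; first by rewrite eqxx /=; ring.
    by rewrite [j == i]eq_sym; move/eqP: hne => /negPf ->; rewrite /=; ring.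
  move=> [a b] /andP[hab hne]; rewrite ent /=.
  have h1 : ((a == i) && (b == j)) = false.
    apply/negbTE; apply: contra hne => /andP[/eqP -> /eqP ->]; by [].
  have h2 : ((a != b) && (b == i) && (a == j)) = false.
    apply/negbTE/negP => /andP[/andP[h3 /eqP h4] /eqP h5].
    rewrite /Apair /= in hab; subst; move: h3 hab hij; rewrite -val_eqE /=; clear; lia.
  by rewrite -!natrM !mulnb h1 andbA h2 /=; ring.
- rewrite (bigD1 (j, i)) /=; last by rewrite /Apair /= ltnW.
  rewrite ent /= !eqxx big1 ?addr0.
    have hne : (j == i) = false by apply/negbTE; rewrite neq_ltn hij.
    by rewrite hne /= hs; ring.
  move=> [a b] /andP[hab hne]; rewrite ent /=.
  have h1 : ((a == i) && (b == j)) = false.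
    apply/negbTE/negP => /andP[/eqP h4 /eqP h5].
    rewrite /Apair /= in hab; subst; move: hab hij; clear; lia.
  have h2 : ((b == i) && (a == j)) = false.
    apply/negbTE; apply: contra hne => /andP[/eqP -> /eqP ->]; by [].
  by rewrite -!natrM !mulnb h1 h2 andbF /=; ring.
Qed.

Lemma free_sym_le {R : realType} {n : nat} (s : seq 'M[R]_n) :
  (forall c, c \in s -> Defs.symmetric c) -> free s -> (size s <= dim_sym n)%N.
Proof.
move=> hs /eqP <-; rewrite -card_Apair.
pose B := [seq (bsym p.1 p.2 : 'M[R]_n) | p <- enum (Apair n)].
apply: (@leq_trans (\dim <<B>>)); last first.
  by apply: leq_trans (dim_span _) _; rewrite size_map -cardE.
apply: dimvS; apply/span_subvP => c hc.
rewrite (sym_decomp _ (hs c hc)); apply: memv_suml => p hp.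
by apply: memvZ; apply: memv_span; apply: (map_f (fun p : 'I_n * 'I_n => bsym p.1 p.2)); rewrite mem_enum.
Qed.

Lemma span_entry0 {R : realType} {n : nat} (X : seq 'M[R]_n) a b v :
  (forall y, y \in X -> y a b = 0) -> v \in <<X>>%VS -> v a b = 0.
Proof.
move=> hX hv; rewrite (coord_span (X := in_tuple X) hv) summxE big1 // => i _.
by rewrite mxE hX ?mulr0 // mem_nth.
Qed.

Lemma span_tip0 {R : realType} {n : nat} (X : seq 'M[R]_n) Z v :
  (forall y, y \in X -> tip y Z = 0) -> v \in <<X>>%VS -> tip v Z = 0.
Proof.
move=> hX hv; rewrite (coord_span (X := in_tuple X) hv).
apply: (big_ind (fun v => tip v Z = 0)).
- by rewrite tipE big1 // => a _; rewrite big1 // => b _; rewrite mxE mul0r.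
- by move=> x y hx hy; rewrite tipDl hx hy addr0.
- by move=> i _; rewrite tipZl hX ?mulr0 // mem_nth.
Qed.

Lemma no_full {R : realType} {n : nat} (N : 'M[R]_n -> Prop) (Z : 'M[R]_n) :
  (forall c, N c -> Defs.symmetric c) -> Defs.symmetric Z -> Z != 0 ->
  (forall c, N c -> tip c Z = 0) -> ~ set_dim N (dim_sym n).
Proof.
move=> hN hZ hZ0 hc [[s [hsN [hfree hsize]]] _].
have hnot : Z \notin <<s>>%VS.
  apply/negP => hin; have := @span_tip0 R n s Z Z (fun y hy => hc y (hsN y hy)) hin.
  rewrite tipE => /eqP; rewrite psumr_eq0; last first.
    by move=> a _; apply: sumr_ge0 => b _; rewrite -expr2 sqr_ge0.
  move=> /allP hall; move/negP: hZ0; apply; apply/eqP/matrixP => a b.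
  have := hall a (mem_index_enum a) => /=; rewrite psumr_eq0; last first.
    by move=> b' _; rewrite -expr2 sqr_ge0.
  move=> /allP /(_ b (mem_index_enum b)) /=; rewrite mxE -expr2 sqrf_eq0 => /eqP //.
have hf : free (Z :: s) by rewrite free_cons hnot hfree.
have hsy : forall c, c \in Z :: s -> Defs.symmetric c.
  by move=> c; rewrite inE => /orP[/eqP ->|/hsN /hN].
by have := @free_sym_le R n (Z :: s) hsy hf; rewrite /= hsize ltnn.
Qed.

Lemma free_piv {R : realType} {n : nat} (T : eqType) (f : T -> 'M[R]_n) (pv : T -> 'I_n * 'I_n)
  (P : seq T) (Y : seq 'M[R]_n) :
  uniq P -> free Y -> (forall p, p \in P -> f p (pv p).1 (pv p).2 != 0) ->
  (forall p q, p \in P -> q \in P -> p != q -> f q (pv p).1 (pv p).2 = 0) ->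
  (forall p y, p \in P -> y \in Y -> y (pv p).1 (pv p).2 = 0) ->
  free (map f P ++ Y).
Proof.
elim: P => [|p P IH] //= /andP[hp hu] hY h1 h2 h3.
rewrite free_cons IH //; first last.
- by move=> q y hq hy; apply: h3 => //; rewrite inE hq orbT.
- by move=> q r hq hr; apply: h2; rewrite inE ?hq ?hr orbT.
- by move=> q hq; apply: h1; rewrite inE hq orbT.
rewrite andbT; apply/negP => hin.
have := @span_entry0 R n _ (pv p).1 (pv p).2 _ _ hin.
have := h1 p (mem_head _ _) => /negP hne h; apply: hne; apply/eqP; apply: h.
move=> y; rewrite mem_cat => /orP[/mapP[q hq ->]|hy].
  apply: h2; rewrite ?inE ?eqxx ?hq ?orbT //.
  by apply/negP => /eqP heq; move: hp; rewrite heq hq.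
by apply: h3 => //; rewrite inE eqxx.
Qed.


Definition fam {R : realType} {n} (k : 'I_n) (sg : R) (p : 'I_n * 'I_n) : 'M[R]_n :=
  if p.1 == p.2 then (if p.1 == k then delta_mx k k else - delta_mx p.1 p.1)
  else (if (p.1 == k) || (p.2 == k) then sg else 1) *: (delta_mx p.1 p.2 + delta_mx p.2 p.1)
       - (p.1 != k)%:R *: delta_mx p.1 p.1 - (p.2 != k)%:R *: delta_mx p.2 p.2.

Lemma fam_entry {R : realType} {n} (k : 'I_n) (sg : R) (p : 'I_n * 'I_n) (a b : 'I_n) :
  fam k sg p a b =
  if p.1 == p.2 then (if p.1 == k then (a == k)%:R * (b == k)%:R else - ((a == p.1)%:R * (b == p.1)%:R))
  else (if (p.1 == k) || (p.2 == k) then sg else 1) * ((a == p.1)%:R * (b == p.2)%:R + (a == p.2)%:R * (b == p.1)%:R)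
       - (p.1 != k)%:R * ((a == p.1)%:R * (b == p.1)%:R) - (p.2 != k)%:R * ((a == p.2)%:R * (b == p.2)%:R).
Proof.
rewrite /fam; case: ifP => _; first by case: ifP => _; rewrite !mxE -?natrM ?mulnb.
by rewrite !mxE -!natrM !mulnb.
Qed.

Lemma trace_ge_diag {R : realType} {n} (X : 'M[R]_n) k : psd X -> X k k <= \tr X.
Proof.
move=> h; rewrite /mxtrace (bigD1 k) //= lerDl; apply: sumr_ge0 => i _; exact: psd_diag.
Qed.

Lemma fam_normal {R : realType} {n} (C : 'M[R]_n -> Prop) (k : 'I_n) (sg : R) p :
  (forall X, C X -> psd X /\ \tr X = 1 /\ (forall j, j != k -> sg * X k j <= 0)) ->
  normal_cone C (delta_mx k k) (fam k sg p).
Proof.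
move=> hC; split.
  apply/matrixP => a b; rewrite mxE !fam_entry.
  case: ifP => hp; first by case: ifP => _; rewrite mulrC.
  by congr (_ - _ - _); rewrite ?[(b == _)%:R * _]mulrC // addrC.
move=> X /hC [hpsd [htr hk]]; rewrite tip_deltar fam_entry.
have hsym : forall i j, X j i = X i j by move=> i j; rewrite -{1}hpsd.1 mxE.
rewrite /fam; case: (p) => i j /=; case: ifP => hij.
  case: ifP => hik.
    rewrite tip_deltal !eqxx mulr1 -htr; exact: trace_ge_diag.
  rewrite tipNl tip_deltal eq_sym hik mulr0 oppr0 oppr_le0; exact: psd_diag.
have hij' : (i == j) = false by [].
rewrite !tipDl !tipNl !tipZl !tipDl !tip_deltal.
have hii := psd_diag _ i hpsd; have hjj := psd_diag _ j hpsd.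
case: (i =P k) => [hik|hik].
  subst i; rewrite !eqxx /= hij' /=.
  have hj : j != k by rewrite eq_sym hij'.
  rewrite hj (hsym k j); have := hk j hj; rewrite /=; nra.
case: (j =P k) => [hjk|hjk].
  subst j; rewrite !eqxx orbT /=.
  have hi : i != k by apply/eqP.
  rewrite [k == i]eq_sym (negPf hi) (hsym k i); have := hk i hi; rewrite /=; nra.
have hi : i != k by apply/eqP.
have hj : j != k by apply/eqP.
rewrite [k == i]eq_sym [k == j]eq_sym (negPf hi) (negPf hj) /=.
have := hsym i j; have := psd_offdiag _ _ _ hpsd (negbT hij'); lra.
Qed.

Lemma fam_off_self {R : realType} {n} (k : 'I_n) (sg : R) (p1 p2 : 'I_n) :
  p1 != p2 -> fam k sg (p1, p2) p1 p2 = if (p1 == k) || (p2 == k) then sg else 1.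
Proof.
move=> h; rewrite fam_entry /= (negPf h) !eqxx [p2 == p1]eq_sym (negPf h) /=.
case: ifP => _; ring.
Qed.

Lemma fam_off_other {R : realType} {n} (k : 'I_n) (sg : R) (p1 p2 q1 q2 : 'I_n) :
  (p1 < p2)%N -> (q1 < q2)%N -> (q1, q2) != (p1, p2) -> fam k sg (q1, q2) p1 p2 = 0.
Proof.
move=> hp hq hne; rewrite fam_entry /=.
have hq' : (q1 == q2) = false by apply/negbTE; rewrite -val_eqE /= neq_ltn hq.
have e1 : (p1 == q1)%:R * (p2 == q2)%:R = 0 :> R.
  rewrite -natrM mulnb; case: (p1 =P q1) => [e|] //=; case: (p2 =P q2) => [e'|] //=.
  by move: hne; rewrite e e' eqxx.
have e2 : (p1 == q2)%:R * (p2 == q1)%:R = 0 :> R.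
  rewrite -natrM mulnb; case: (p1 =P q2) => [e|] //=; case: (p2 =P q1) => [e'|] //=.
  by subst; move: hp hq; clear; lia.
have hpp : (p1 == p2) = false by apply/negbTE; rewrite -val_eqE /= neq_ltn hp.
have e3 : forall x : 'I_n, (p1 == x)%:R * (p2 == x)%:R = 0 :> R.
  move=> x; rewrite -natrM mulnb; case: (p1 =P x) => [e|] //=; by rewrite -e eq_sym hpp.
by rewrite hq' e1 e2 !e3; ring.
Qed.

Lemma fam_diag_off {R : realType} {n} (k : 'I_n) (sg : R) (q p1 p2 : 'I_n) :
  p1 != p2 -> fam k sg (q, q) p1 p2 = 0.
Proof.
move=> h; rewrite fam_entry /= eqxx.
have e3 : forall x : 'I_n, (p1 == x)%:R * (p2 == x)%:R = 0 :> R.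
  move=> x; rewrite -natrM mulnb; case: (p1 =P x) => [e|] //=; by rewrite -e eq_sym (negPf h).
by case: ifP => hqk; [rewrite e3 | rewrite e3 oppr0].
Qed.

Lemma fam_diag_self {R : realType} {n} (k : 'I_n) (sg : R) (q : 'I_n) :
  fam k sg (q, q) q q != 0.
Proof.
rewrite fam_entry /= !eqxx; case: ifP => h; first by rewrite (eqP h) eqxx mulr1 oner_eq0.
by rewrite mulr1 oppr_eq0 oner_eq0.
Qed.

Lemma fam_diag_other {R : realType} {n} (k : 'I_n) (sg : R) (q p : 'I_n) :
  q != p -> fam k sg (q, q) p p = 0.
Proof.
move=> h; rewrite fam_entry /= eqxx [p == q]eq_sym (negPf h) mulr0 oppr0.
case: ifP => // /eqP e; by rewrite -e [p == q]eq_sym (negPf h) mulr0.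
Qed.

Lemma vertex_of {R : realType} {n} (C : 'M[R]_n -> Prop) (k : 'I_n) (sg : R) :
  sg != 0 -> C (delta_mx k k) ->
  (forall X, C X -> psd X /\ \tr X = 1 /\ (forall j, j != k -> sg * X k j <= 0)) ->
  is_vertex C (delta_mx k k).
Proof.
move=> hsg hCk hC; split => //; split; last first.
  move=> s hs hf; apply: free_sym_le hf => c /hs []//.
pose offp := fun p : 'I_n * 'I_n => p.1 != p.2.
pose Poff := filter offp (enum (Apair n)).
pose Pdiag := filter (predC offp) (enum (Apair n)).
exists (map (fam k sg) Poff ++ (map (fam k sg) Pdiag ++ [::])).
split; last split.
- move=> c; rewrite cats0 mem_cat => /orP[] /mapP[p _ ->]; exact: fam_normal.
- apply: (@free_piv R n _ _ id).
  + by apply: filter_uniq; apply: enum_uniq.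
  + apply: (@free_piv R n _ _ id); rewrite ?nil_free //.
    * by apply: filter_uniq; apply: enum_uniq.
    * by move=> [p1 p2]; rewrite mem_filter /= /offp /= negbK => /andP[/eqP -> _]; apply: fam_diag_self.
    * move=> [p1 p2] [q1 q2]; rewrite !mem_filter /= /offp /= !negbK => /andP[/eqP e1 _] /andP[/eqP e2 _] hne.
      subst; apply: fam_diag_other; apply: contra hne => /eqP ->; by [].
  + move=> [p1 p2]; rewrite mem_filter /= /offp /= => /andP[h _]; rewrite fam_off_self //.
    by case: ifP => _ //; rewrite oner_eq0.
  + move=> [p1 p2] [q1 q2]; rewrite !mem_filter /offp /= => /and3P[h1 h2 _] /and3P[h3 h4 _] hne.
    have h2' : (p1 <= p2)%N := h2; have h4' : (q1 <= q2)%N := h4.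
    apply: fam_off_other; [rewrite ltn_neqAle h2' andbT | rewrite ltn_neqAle h4' andbT | by rewrite eq_sym].
      by move: h1; rewrite -val_eqE.
    by move: h3; rewrite -val_eqE.
  + move=> [p1 p2] y; rewrite mem_filter /= /offp /= => /andP[h _].
    rewrite cats0 => /mapP[[q1 q2]]; rewrite mem_filter /= /offp /= negbK => /andP[/eqP e _] ->.
    by subst; apply: fam_diag_off.
- rewrite cats0 size_cat !size_map !size_filter count_predC -cardE; exact: card_Apair.
Qed.


Lemma quad_pos {R : realType} (z K : R) :
  (forall t, -1/2 <= t <= 1/2 -> t * z + t^+2 * K <= 0) -> ~ (0 < z).
Proof.
move=> h hz.
have hK : K <= 0.
  have h1 := h (1/2); have h2 := h (-1/2).
  have : (1/2 : R) * z + (1/2)^+2 * K <= 0 by apply: h1; lra.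
  have : (-1/2 : R) * z + (-1/2)^+2 * K <= 0 by apply: h2; lra.
  rewrite !expr2; lra.
have hd : 0 < 2 * (z - K) by lra.
pose t := z / (2 * (z - K)).
have ht : t * (2 * (z - K)) = z by rewrite /t mulrVK // unitfE gt_eqF.
have htp : 0 < t by rewrite /t divr_gt0.
have htl : t <= 1/2.
  rewrite /t ler_pdivrMr // ; lra.
have := h t; rewrite expr2 => /(_ _) H.
have : t * z + t * t * K <= 0 by apply: H; lra.
nra.
Qed.

Lemma quad_zero {R : realType} (z K : R) :
  (forall t, -1/2 <= t <= 1/2 -> t * z + t^+2 * K <= 0) -> z = 0.
Proof.
move=> h; case: (ltrgtP z 0) => // hz; exfalso.
- apply: (@quad_pos R (- z) K) => [t ht|]; last by lra.
  have H : (-t) * z + (-t)^+2 * K <= 0 by apply: h; lra.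
  rewrite sqrrN in H; nra.
- by apply: (quad_pos _ _ h); assumption.
Qed.

Lemma curve_tangent {R : realType} {n} (C : 'M[R]_n -> Prop) (Xb Z W : 'M[R]_n) (q : R) :
  0 <= q ->
  (forall t, -1/2 <= t <= 1/2 -> C ((1 + t^+2 * q)^-1 *: (Xb + t *: Z + t^+2 *: W))) ->
  forall c, normal_cone C Xb c -> tip c Z = 0.
Proof.
move=> hq hC c [_ hc]; apply: (@quad_zero R _ (tip c W - q * tip c Xb)) => t ht.
have hpos : 0 < 1 + t^+2 * q by have := sqr_ge0 t; nra.
have := hc _ (hC t ht); rewrite tipZr !tipDr !tipZr.
rewrite ler_pdivrMl // => H; nra.
Qed.

Definition dsc {R : realType} {n} (e : 'rV[R]_n) (X : 'M[R]_n) : 'M[R]_n :=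
  diag_mx e *m X *m diag_mx e.

Lemma dsc_entry {R : realType} {n} (e : 'rV[R]_n) (X : 'M[R]_n) i j :
  dsc e X i j = e 0 i * X i j * e 0 j.
Proof. by rewrite /dsc mul_mx_diag mxE mul_diag_mx mxE. Qed.

Lemma psd_dsc {R : realType} {n} (e : 'rV[R]_n) (X : 'M[R]_n) : psd X -> psd (dsc e X).
Proof.
move=> [hs hq]; split.
  by rewrite /Defs.symmetric /dsc !trmx_mul tr_diag_mx hs mulmxA.
move=> x; have := hq (diag_mx e *m x).
by rewrite /dsc trmx_mul tr_diag_mx !mulmxA.
Qed.

Lemma psd_scale {R : realType} {n} (c : R) (X : 'M[R]_n) : 0 <= c -> psd X -> psd (c *: X).
Proof.
move=> hc [hs hq]; split.
  by rewrite /Defs.symmetric linearZ /= hs.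
move=> x; rewrite -scalemxAr -scalemxAl mxE; apply: mulr_ge0 => //.
Qed.

Lemma psd_outer {R : realType} {n} (x : 'cV[R]_n) : psd (x *m x^T).
Proof.
split; first by rewrite /Defs.symmetric trmx_mul trmxK.
move=> y; rewrite !mulmxA -mulmxA mxE big_ord1.
have -> : (x^T *m y) 0 0 = (y^T *m x) 0 0.
  by rewrite !mxE; apply: eq_bigr => l _; rewrite !mxE mulrC.
by rewrite -expr2 sqr_ge0.
Qed.

Lemma sym_entry {R : realType} {n} (X : 'M[R]_n) i j : Defs.symmetric X -> X j i = X i j.
Proof. by move=> hs; rewrite -{1}hs mxE. Qed.

Lemma diag_le1 {R : realType} {n} (X : 'M[R]_n) k : psd X -> \tr X = 1 -> 0 <= X k k <= 1.
Proof. by move=> h ht; rewrite psd_diag //= -ht trace_ge_diag. Qed.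

Lemma two_diag {R : realType} {n} (C : 'M[R]_n -> Prop) (Xb : 'M[R]_n) :
  (forall X, C X -> psd X /\ \tr X = 1) ->
  (forall X (e : 'rV[R]_n), C X -> (forall i, 0 < e 0 i) -> 0 < \tr (dsc e X) ->
      C ((\tr (dsc e X))^-1 *: dsc e X)) ->
  is_vertex C Xb -> forall i j, i != j -> Xb i i = 0 \/ Xb j j = 0.
Proof.
move=> hC hsc [hXb hdim] i j hij.
have [hpsd htr] := hC _ hXb.
case: (Xb i i =P 0) => [|hi]; [by left|]; case: (Xb j j =P 0) => [|hj]; [by right|].
exfalso.
pose a := Xb i i; pose b := Xb j j.
have [ha0 ha1] := andP (diag_le1 _ i hpsd htr).
have [hb0 hb1] := andP (diag_le1 _ j hpsd htr).
pose d := \row_l (b * (l == i)%:R - a * (l == j)%:R) : 'rV[R]_n.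
have hd : forall l, -1 <= d 0 l <= 1.
  move=> l; rewrite mxE; case: (l =P i) => [->|_].
    rewrite (negPf hij) /= ?mulr1n ?mulr0n; rewrite /a /b; apply/andP; split; lra.
  case: (l =P j) => _ /=; rewrite ?mulr1n ?mulr0n; rewrite /a /b; apply/andP; split; lra.
pose Z := \matrix_(x, y) ((d 0 x + d 0 y) * Xb x y) : 'M[R]_n.
pose W := \matrix_(x, y) (d 0 x * d 0 y * Xb x y) : 'M[R]_n.
have hsum : forall F : 'I_n -> R, \sum_x (d 0 x * F x) = b * F i - a * F j.
  move=> F; rewrite (eq_bigr (fun x => (x == i)%:R * (b * F x) - (x == j)%:R * (a * F x))).
    by rewrite sumrB !sum_delta.
  by move=> x _; rewrite mxE; ring.
have htrZ : \tr Z = 0.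
  rewrite /mxtrace (eq_bigr (fun x => d 0 x * (2 * Xb x x))); last by move=> x _; rewrite mxE; ring.
  by rewrite hsum /a /b; ring.
pose q := \tr W.
have hq : 0 <= q.
  rewrite /q /mxtrace; apply: sumr_ge0 => x _; rewrite mxE -expr2; apply: mulr_ge0.
    exact: sqr_ge0.
  exact: psd_diag.
have hcurve : forall t, -1/2 <= t <= 1/2 -> C ((1 + t^+2 * q)^-1 *: (Xb + t *: Z + t^+2 *: W)).
  move=> t ht; pose e := \row_l (1 + t * d 0 l) : 'rV[R]_n.
  have he : forall l, 0 < e 0 l.
    move=> l; rewrite mxE; have := hd l; case/andP => h1 h2.
    case/andP: ht => h3 h4; nra.
  have hY : dsc e Xb = Xb + t *: Z + t^+2 *: W.
    by apply/matrixP => x y; rewrite dsc_entry !mxE; ring.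
  have htrY : \tr (dsc e Xb) = 1 + t^+2 * q.
    by rewrite hY !mxtraceD !mxtraceZ htr htrZ mulr0 addr0.
  have hpos : 0 < 1 + t^+2 * q by have := sqr_ge0 t; nra.
  by have := hsc Xb e hXb he; rewrite htrY hY; apply.
have htan := @curve_tangent R n C Xb Z W q hq hcurve.
apply: (@no_full R n (normal_cone C Xb) Z) hdim.
- by move=> c [].
- apply/matrixP => x y; rewrite !mxE (sym_entry _ _ _ hpsd.1) addrC //.
- apply/negP => /eqP /matrixP /(_ i i); rewrite !mxE eqxx (negPf hij) /= ?mulr1n ?mulr0n /b => hz.
  have h2 : Xb j j * Xb i i = 0 by nra.
  by move/eqP: h2; rewrite mulf_eq0 => /orP[] /eqP.
- exact: htan.
Qed.

Lemma vertex_delta {R : realType} {n} (C : 'M[R]_n -> Prop) (Xb : 'M[R]_n) :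
  (forall X, C X -> psd X /\ \tr X = 1) ->
  (forall X (e : 'rV[R]_n), C X -> (forall i, 0 < e 0 i) -> 0 < \tr (dsc e X) ->
      C ((\tr (dsc e X))^-1 *: dsc e X)) ->
  is_vertex C Xb -> exists k, Xb = delta_mx k k.
Proof.
move=> hC hsc hv; have h2 := @two_diag R n C Xb hC hsc hv.
have [hpsd htr] := hC _ hv.1.
have [k hk] : exists k, Xb k k != 0.
  case: (pickP (fun k => Xb k k != 0)) => [k hk|hall]; first by exists k.
  move: htr; rewrite /mxtrace big1 => [|i _]; last by apply/eqP; rewrite -[_ == 0]negbK hall.
  by move/eqP; rewrite eq_sym oner_eq0.
have hz : forall x, x != k -> Xb x x = 0.
  move=> x hx; case: (h2 x k hx) => // /eqP; by rewrite (negPf hk).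
exists k; apply/matrixP => x y; rewrite delta_entry.
case: (x =P k) => [->|hx].
  case: (y =P k) => [->|hy].
    rewrite /= mulr1n mulr1 -htr /mxtrace (bigD1 k) //= big1 ?addr0 // => i hi; exact: hz.
  have hy' : y != k by apply/eqP.
  rewrite /= mulr0n mulr0 (sym_entry _ _ _ hpsd.1).
  exact: (psd_zero _ _ _ hpsd hy' (hz _ hy')).
have hx' : x != k by apply/eqP.
rewrite /= mulr0n mul0r; case: (x =P y) => [<-|hxy]; first exact: hz.
have hxy' : x != y by apply/eqP.
exact: (psd_zero _ _ _ hpsd hxy' (hz _ hx')).
Qed.

Lemma vertex_full {R : realType} {n} (C : 'M[R]_n -> Prop) (k : 'I_n) (E : rel 'I_n) :
  (forall j, j != k -> ~~ E k j -> forall t : R, -1/2 <= t <= 1/2 ->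
     C ((1 + t^+2 * 1)^-1 *: (delta_mx k k + t *: (delta_mx k j + delta_mx j k) + t^+2 *: delta_mx j j))) ->
  is_vertex C (delta_mx k k) -> forall j, j != k -> E k j.
Proof.
move=> hc [_ hdim] j hj; apply/negPn/negP => hE.
have htan := @curve_tangent R n C _ _ _ 1 ler01 (hc j hj hE).
apply: (@no_full R n (normal_cone C (delta_mx k k)) (delta_mx k j + delta_mx j k)) hdim.
- by move=> c [].
- by rewrite /Defs.symmetric linearD /= !trmx_delta addrC.
- apply/negP => /eqP /matrixP /(_ k j); rewrite !mxE !eqxx (negPf hj) andbF /= => /eqP.
  by rewrite ?mulr1n ?mulr0n addr0 oner_eq0.
- exact: htan.
Qed.


Lemma tr_delta {R : realType} {n} (a b : 'I_n) : \tr (delta_mx a b : 'M[R]_n) = (a == b)%:R.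
Proof.
have -> : \tr (delta_mx a b : 'M[R]_n) = tip 1%:M (delta_mx a b) by rewrite /tip trmx1 mul1mx.
by rewrite tip_deltar mxE.
Qed.

Lemma psd_delta {R : realType} {n} (k : 'I_n) : psd (delta_mx k k : 'M[R]_n).
Proof.
have -> : (delta_mx k k : 'M[R]_n) = delta_mx k (0 : 'I_1) *m (delta_mx k (0 : 'I_1))^T.
  by rewrite trmx_delta mul_delta_mx.
exact: psd_outer.
Qed.

Lemma scaled_ok {R : realType} {n} (X : 'M[R]_n) (e : 'rV[R]_n) :
  psd X -> (forall i, 0 < e 0 i) -> 0 < \tr (dsc e X) ->
  psd ((\tr (dsc e X))^-1 *: dsc e X) /\ \tr ((\tr (dsc e X))^-1 *: dsc e X) = 1 /\
  forall i j, ((\tr (dsc e X))^-1 *: dsc e X) i j = (\tr (dsc e X))^-1 * (e 0 i * e 0 j) * X i j.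
Proof.
move=> hX he ht; split; last split.
- by apply: psd_scale; [apply: ltW; rewrite invr_gt0 | apply: psd_dsc].
- by rewrite mxtraceZ mulVf // gt_eqF.
- by move=> i j; rewrite mxE dsc_entry; ring.
Qed.

Lemma rank1 {R : realType} {n} (k j : 'I_n) (t : R) :
  delta_mx k k + t *: (delta_mx k j + delta_mx j k) + t^+2 *: delta_mx j j =
  (delta_mx k (0 : 'I_1) + t *: delta_mx j (0 : 'I_1)) *m (delta_mx k (0 : 'I_1) + t *: delta_mx j (0 : 'I_1))^T :> 'M[R]_n.
Proof.
apply/matrixP => a b; rewrite !mxE big_ord1 !mxE !eqxx !andbT -!mulnb !natrM; ring.
Qed.

Lemma rank1_spec {R : realType} {n} (k j : 'I_n) (t : R) (E : rel 'I_n) :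
  simple_graph E -> j != k -> ~~ E k j ->
  let M := (1 + t^+2 * 1)^-1 *: (delta_mx k k + t *: (delta_mx k j + delta_mx j k) + t^+2 *: delta_mx j j) in
  psd M /\ \tr M = 1 /\ (forall a b, E a b -> M a b = 0).
Proof.
move=> [hsym hirr] hj hE M.
have hpos : 0 < 1 + t^+2 * 1 by have := sqr_ge0 t; lra.
split; last split.
- by apply: psd_scale; [apply: ltW; rewrite invr_gt0 | rewrite rank1; apply: psd_outer].
- rewrite /M mxtraceZ !mxtraceD !mxtraceZ mxtraceD !tr_delta !eqxx [k == j]eq_sym (negPf hj).
  rewrite /= ?mulr1n ?mulr0n; field; rewrite mulr1 in hpos; by rewrite (gt_eqF hpos).
- move=> a b hab; rewrite /M !mxE.
  have z1 : ((a == k) && (b == k)) = false.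
    by apply/negbTE/negP => /andP[/eqP ea /eqP eb]; subst; move: (hirr k); rewrite hab.
  have z2 : ((a == k) && (b == j)) = false.
    by apply/negbTE/negP => /andP[/eqP ea /eqP eb]; subst; move: hE; rewrite hab.
  have z3 : ((a == j) && (b == k)) = false.
    by apply/negbTE/negP => /andP[/eqP ea /eqP eb]; subst; move: hE; rewrite hsym hab.
  have z4 : ((a == j) && (b == j)) = false.
    by apply/negbTE/negP => /andP[/eqP ea /eqP eb]; subst; move: (hirr j); rewrite hab.
  by rewrite z1 z2 z3 z4 /= ?mulr0n; ring.
Qed.

Lemma full_degP {n} (E : rel 'I_n) (k : 'I_n) :
  simple_graph E -> full_deg E k <-> (forall j, j != k -> E k j).
Proof.
move=> [hsym hirr]; rewrite /full_deg /deg; split.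
- move=> hd j hj; apply/negPn/negP => hE.
  have hsub : [set x | E k x] \subset ~: [set k; j].
    apply/subsetP => x; rewrite !inE => hx; apply/negP => /orP[/eqP e|/eqP e]; subst.
      by move: (hirr k); rewrite hx.
    by move: hE; rewrite hx.
  have := subset_leq_card hsub.
  have := cardsC [set k; j]; rewrite cards2 eq_sym hj card_ord hd.
  have : (1 < n)%N.
    have hk := ltn_ord k; have hjn := ltn_ord j.
    by move: hj; rewrite -val_eqE /=; move: hk hjn; clear; lia.
  clear; lia.
- move=> hall; have -> : [set x | E k x] = [set~ k].
    apply/setP => x; rewrite !inE; case: (x =P k) => [->|hx] /=; first by rewrite (negPf (hirr k)).
    by apply: hall; apply/eqP.
  by rewrite cardsC1 card_ord subn1.
Qed.


Lemma delta_entry0 {R : realType} {n} (E : rel 'I_n) (k a b : 'I_n) :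
  simple_graph E -> E a b -> (delta_mx k k : 'M[R]_n) a b = 0.
Proof.
move=> [_ hirr] hab; rewrite mxE.
case: (a =P k) => [ea|] /=; last by rewrite mulr0n.
case: (b =P k) => [eb|] /=; last by rewrite mulr0n.
by subst; move: (hirr k); rewrite hab.
Qed.

Lemma sc_sign {R : realType} (c e1 e2 x : R) : 0 < c -> 0 < e1 -> 0 < e2 ->
  (x = 0 -> c * (e1 * e2) * x = 0) /\ (0 <= x -> 0 <= c * (e1 * e2) * x) /\
  (x <= 0 -> c * (e1 * e2) * x <= 0).
Proof.
move=> hc h1 h2; have hp : 0 < c * (e1 * e2) by rewrite !mulr_gt0.
split; first by move=> ->; rewrite mulr0.
split; first by move=> hx; apply: mulr_ge0 => //; exact: ltW.
by move=> hx; rewrite pmulr_rle0.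
Qed.

Theorem corollary3p7 (R : realType) (n : nat) (E : rel 'I_n) :
  simple_graph E ->
  (forall X : 'M[R]_n,
      is_vertex (spec1 E) X <-> exists k, full_deg E k /\ X = ekek k) /\
  (forall X : 'M[R]_n,
      is_vertex (spec2 E) X <-> exists k, X = ekek k) /\
  (forall X : 'M[R]_n,
      is_vertex (spec3 E) X <-> exists k, full_deg E k /\ X = ekek k).
Proof.
move=> hG; have [hsymE hirr] := hG.
have hdk : forall k : 'I_n, psd (delta_mx k k : 'M[R]_n) /\ \tr (delta_mx k k : 'M[R]_n) = 1.
  by move=> k; split; [exact: psd_delta | rewrite tr_delta eqxx].
split; last split.
-
  have hC : forall X : 'M[R]_n, spec1 E X -> psd X /\ \tr X = 1 by move=> X -[h1 [h2 _]]; split.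
  have hsc : forall X (e : 'rV[R]_n), spec1 E X -> (forall i, 0 < e 0 i) -> 0 < \tr (dsc e X) ->
      spec1 E ((\tr (dsc e X))^-1 *: dsc e X).
    move=> X e [hp [ht hz]] he htp; have [h1 [h2 h3]] := scaled_ok _ _ hp he htp.
    have hinv : 0 < (\tr (dsc e X))^-1 by rewrite invr_gt0.
    split => //; split => // i j hij; rewrite h3.
    by apply: (sc_sign _ _ _ (X i j) hinv (he i) (he j)).1; apply: hz.
  move=> X; split.
  + move=> hv; have [k hk] := @vertex_delta R n _ X hC hsc hv; exists k; split; last by rewrite hk.
    apply/(full_degP E k hG); apply: (@vertex_full R n (spec1 E) k E); last by rewrite -hk.
    move=> j hj hE t ht; have [h1 [h2 h3]] := rank1_spec k j t E hG hj hE; by split.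
  + move=> [k [/(full_degP E k hG) hf ->]]; rewrite /ekek.
    apply: (@vertex_of R n (spec1 E) k 1); first exact: oner_neq0.
      split; first exact: (hdk k).1; split; first exact: (hdk k).2.
      by move=> a b hab; apply: (delta_entry0 E k a b hG hab).
    move=> Y [hp [ht hz]]; split => //; split => // j hj.
    by rewrite hz ?mul1r // hf.
-
  have hC : forall X : 'M[R]_n, spec2 E X -> psd X /\ \tr X = 1 by move=> X -[h1 [h2 _]]; split.
  have hsc : forall X (e : 'rV[R]_n), spec2 E X -> (forall i, 0 < e 0 i) -> 0 < \tr (dsc e X) ->
      spec2 E ((\tr (dsc e X))^-1 *: dsc e X).
    move=> X e [hp [ht [hz hnn]]] he htp; have [h1 [h2 h3]] := scaled_ok _ _ hp he htp.
    have hinv : 0 < (\tr (dsc e X))^-1 by rewrite invr_gt0.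
    have hs := sc_sign _ _ _ _ hinv (he _) (he _).
    split => //; split => //; split.
      by move=> i j hij; rewrite h3; apply: (hs _ _ _).1; apply: hz.
    by move=> i j hij hE; rewrite h3; apply: (hs _ _ _).2.1; apply: hnn.
  move=> X; split.
  + by move=> hv; have [k hk] := @vertex_delta R n _ X hC hsc hv; exists k; rewrite hk.
  + move=> [k ->]; rewrite /ekek.
    apply: (@vertex_of R n (spec2 E) k (-1)); first by rewrite oppr_eq0 oner_neq0.
      split; first exact: (hdk k).1; split; first exact: (hdk k).2.
      split; first by move=> a b hab; apply: (delta_entry0 E k a b hG hab).
      by move=> a b hab _; rewrite mxE; case: (_ && _).
    move=> Y [hp [ht [hz hnn]]]; split => //; split => // j hj.
    rewrite mulN1r oppr_le0; case hE: (E k j); first by rewrite hz.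
    by apply: hnn; [rewrite eq_sym | rewrite hE].
-
  have hC : forall X : 'M[R]_n, spec3 E X -> psd X /\ \tr X = 1 by move=> X -[h1 [h2 _]]; split.
  have hsc : forall X (e : 'rV[R]_n), spec3 E X -> (forall i, 0 < e 0 i) -> 0 < \tr (dsc e X) ->
      spec3 E ((\tr (dsc e X))^-1 *: dsc e X).
    move=> X e [hp [ht hz]] he htp; have [h1 [h2 h3]] := scaled_ok _ _ hp he htp.
    have hinv : 0 < (\tr (dsc e X))^-1 by rewrite invr_gt0.
    split => //; split => // i j hij; rewrite h3.
    by apply: (sc_sign _ _ _ (X i j) hinv (he i) (he j)).2.2; apply: hz.
  move=> X; split.
  + move=> hv; have [k hk] := @vertex_delta R n _ X hC hsc hv; exists k; split; last by rewrite hk.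
    apply/(full_degP E k hG); apply: (@vertex_full R n (spec3 E) k E); last by rewrite -hk.
    move=> j hj hE t ht; have [h1 [h2 h3]] := rank1_spec k j t E hG hj hE.
    by split => //; split => // a b hab; rewrite h3.
  + move=> [k [/(full_degP E k hG) hf ->]]; rewrite /ekek.
    apply: (@vertex_of R n (spec3 E) k 1); first exact: oner_neq0.
      split; first exact: (hdk k).1; split; first exact: (hdk k).2.
      by move=> a b hab; rewrite (delta_entry0 E k a b hG hab).
    move=> Y [hp [ht hz]]; split => //; split => // j hj.
    by rewrite mul1r hz // hf.
Qed.
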